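(* For every finite set $A$ of lines in $\mathbb{R}^2$ there exists a point $q\in\mathbb{R}^2$ such that for every closed halfplane $h$ containing $q$ there is a set $A'\subseteq A$ with $|A'|\ge\sqrt{|A|/3}$ and $V(A')\subseteq h$.
   Context: For a finite set $A$ of lines in $\mathbb{R}^2$, $V(A)$ denotes the set of all intersection points of pairs of lines of $A$. *)

(* Defs.v *)
From Stdlib Require Import Reals List.
Import ListNotations.
Open Scope R_scope.

Definition point := (R * R)%type.

Definition is_line (L : point -> Prop) : Prop :=
  exists a b c : R, (a <> 0 \/ b <> 0) /\
    forall p : point, L p <-> a * fst p + b * snd p = c.

Definition is_closed_halfplane (h : point -> Prop) : Prop :=
  exists a b c : R, (a <> 0 \/ b <> 0) /\
    forall p : point, h p <-> a * fst p + b * snd p <= c.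

Definition V (A : list (point -> Prop)) (p : point) : Prop :=
  exists l1 l2, In l1 A /\ In l2 A /\ l1 <> l2 /\ l1 p /\ l2 p.

(* Main.v *)
Require Import Defs.
From Stdlib Require Import Reals List Classical ClassicalEpsilon FunctionalExtensionality PropExtensionality Lia Lra Psatz.
Import ListNotations.
Open Scope nat_scope.

Lemma dec_ex (P : Prop) : exists b : bool, (b = true <-> P).
Proof. destruct (classic P) as [H|H]; [exists true|exists false]; split; intros; try easy; tauto. Qed.
Definition dec (P : Prop) : bool := proj1_sig (constructive_indefinite_description _ (dec_ex P)).
Lemma dec_spec (P : Prop) : dec P = true <-> P.
Proof. unfold dec. destruct (constructive_indefinite_description _ _) as [b Hb]. exact Hb. Qed.
Lemma dec_false (P : Prop) : dec P = false <-> ~ P.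
Proof. pose proof (dec_spec P). destruct (dec P); split; intros HH; try easy.
  - exfalso; apply HH; apply H; reflexivity.
  - intros HP. apply H in HP. discriminate. Qed.

Definition filt {T} (P : T -> Prop) (l : list T) := filter (fun x => dec (P x)) l.
Lemma filt_In {T} (P : T -> Prop) l x : In x (filt P l) <-> In x l /\ P x.
Proof. unfold filt. rewrite filter_In, dec_spec. tauto. Qed.
Lemma filt_NoDup {T} (P : T -> Prop) l : NoDup l -> NoDup (filt P l).
Proof. intros; apply NoDup_filter; auto. Qed.
Lemma filt_len {T} (P : T -> Prop) l : length (filt P l) + length (filt (fun x => ~ P x) l) = length l.
Proof.
  unfold filt. rewrite <- (filter_length (fun x => dec (P x)) l). f_equal. f_equal.
  apply filter_ext. intros a. destruct (classic (P a)) as [E|E].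
  - rewrite (proj2 (dec_spec _) E). rewrite (proj2 (dec_false (~ P a))); auto.
  - rewrite (proj2 (dec_false _) E). rewrite (proj2 (dec_spec (~ P a))); auto.
Qed.

Section Mirsky.
Variable T : Type.
Variable lt : T -> T -> Prop.
Variable D : T -> Prop.
Hypothesis Hirr : forall x, D x -> ~ lt x x.
Hypothesis Htr : forall x y z, D x -> D y -> D z -> lt x y -> lt y z -> lt x z.

Definition chain (l : list T) := forall x y, In x l -> In y l -> x <> y -> lt x y \/ lt y x.
Definition antichain (l : list T) := forall x y, In x l -> In y l -> x <> y -> ~ lt x y.

Lemma min_below : forall P : list T, (forall x, In x P -> D x) -> forall y, In y P ->
  exists x, In x P /\ (x = y \/ lt x y) /\ forall z, In z P -> ~ lt z x.
Proof.
  induction P as [|a P IH]; intros HD y Hy; [destruct Hy|].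
  assert (HD' : forall x, In x P -> D x) by (intros; apply HD; simpl; auto).
  assert (Ha : D a) by (apply HD; simpl; auto).
  assert (Hz : forall z, In z P -> lt z a -> exists x, In x (a::P) /\ lt x a /\ forall w, In w (a::P) -> ~ lt w x).
  { intros z Hz Hza. destruct (IH HD' z Hz) as [x [Hx [Hxz Hmin]]].
    assert (Hxa : lt x a).
    { destruct Hxz as [E|E]; [subst x; auto|]. apply (Htr x z a); auto. }
    exists x. split; [simpl; auto|]. split; auto.
    intros w [<-|Hw]; [|apply Hmin; auto].
    intro Hax. apply (Hirr a Ha). eapply Htr; eauto. }
  destruct Hy as [<-|Hy].
  - destruct (classic (exists z, In z P /\ lt z a)) as [[z [Hz1 Hz2]]|Hn].
    + destruct (Hz z Hz1 Hz2) as [x [? [? ?]]]. exists x; auto.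
    + exists a. split; [simpl;auto|]. split; auto.
      intros w [<-|Hw]; [apply Hirr; auto|]. intro; apply Hn; eauto.
  - destruct (IH HD' y Hy) as [x [Hx [Hxy Hmin]]].
    destruct (classic (lt a x)) as [Hax|Hax].
    + destruct (classic (exists z, In z P /\ lt z a)) as [[z [Hz1 Hz2]]|Hn].
      * destruct (Hz z Hz1 Hz2) as [x' [? [? ?]]]. exists x'. split; auto. split; auto.
        right. assert (D x') by (apply HD; auto).
        assert (Dx : D x) by (apply HD'; auto).
        assert (lt x' x) by (apply (Htr x' a x); auto).
        destruct Hxy as [E|E]; [subst y; auto| apply (Htr x' x y); auto; apply HD'; auto].
      * exists a. split; [simpl;auto|]. split.
        { right. destruct Hxy as [E|E]; [subst y; auto| apply (Htr a x y); auto]. }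
        intros w [<-|Hw]; [apply Hirr; auto|]. intro; apply Hn; eauto.
    + exists x. split; [simpl; auto|]. split; auto.
      intros w [<-|Hw]; auto.
Qed.

Lemma chain_min : forall l, (forall x, In x l -> D x) -> chain l -> forall y, In y l ->
  exists y0, In y0 l /\ forall z, In z l -> z = y0 \/ lt y0 z.
Proof.
  intros l HD Hc y Hy. destruct (min_below l HD y Hy) as [x [Hx [_ Hm]]].
  exists x. split; auto. intros z Hz. destruct (classic (z = x)); auto.
  destruct (Hc x z Hx Hz) as [H1|H1]; auto. exfalso; eapply Hm; eauto.
Qed.

Lemma mirsky_aux : forall k P, length P <= k -> NoDup P -> (forall x, In x P -> D x) ->
  exists S1 S2, incl S1 P /\ NoDup S1 /\ chain S1 /\ incl S2 P /\ NoDup S2 /\ antichain S2 /\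
    length P <= length S1 * length S2.
Proof.
  induction k as [|k IH]; intros P Hlen HP HD.
  - destruct P; [|simpl in Hlen; lia]. exists [], []. repeat split; try (intro; simpl; tauto); try constructor; simpl; auto;
    intros x y Hx; destruct Hx.
  - destruct P as [|p0 P0] eqn:EP.
    + exists [], []. repeat split; try (intro; simpl; tauto); try constructor; simpl; auto;
      intros x y Hx; destruct Hx.
    + rewrite <- EP in *.
      set (ismin := fun x => forall z, In z P -> ~ lt z x).
      set (M := filt ismin P). set (P' := filt (fun x => ~ ismin x) P).
      assert (Hlen2 : length M + length P' = length P) by apply filt_len.
      assert (HM0 : exists m, In m M).
      { assert (In p0 P) by (rewrite EP; simpl; auto).
        destruct (min_below P HD p0 H) as [x [Hx [_ Hm]]]. exists x. apply filt_In. split; auto. }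
      destruct HM0 as [m Hm].
      assert (HMl : length M >= 1) by (destruct M; [destruct Hm| simpl; lia]).
      assert (HMa : antichain M).
      { intros x y Hx Hy _. apply filt_In in Hx, Hy. apply (proj2 Hy). tauto. }
      assert (HMnd : NoDup M) by (apply filt_NoDup; auto).
      assert (HMinc : incl M P) by (intros x Hx; apply filt_In in Hx; tauto).
      destruct (IH P' ltac:(lia) (filt_NoDup _ _ HP) ltac:(intros x Hx; apply filt_In in Hx; apply HD; tauto))
        as [S1 [S2 [Hi1 [Hn1 [Hc1 [Hi2 [Hn2 [Ha2 Hl]]]]]]]].
      destruct S1 as [|y S1'] eqn:ES1.
      *
        assert (length P' = 0) by (simpl in Hl; lia).
        exists [m], M. repeat split; auto.
        -- intros x [<-|[]]; auto.
        -- constructor; [simpl; auto| constructor].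
        -- intros x y' [<-|[]] [<-|[]]; tauto.
        -- simpl. lia.
      * rewrite <- ES1 in *.
        assert (HD1 : forall x, In x S1 -> D x) by (intros x0 Hx0; apply HD; apply (proj1 (proj1 (filt_In _ _ _) (Hi1 _ Hx0)))).
        assert (Hy : In y S1) by (rewrite ES1; simpl; auto).
        destruct (chain_min S1 HD1 Hc1 y Hy) as [y0 [Hy0 Hy0m]].
        assert (Hy0P : In y0 P /\ ~ ismin y0) by (apply (proj1 (filt_In (fun x => ~ ismin x) P y0)); apply Hi1; auto).
        destruct Hy0P as [Hy0P Hnm].
        assert (exists z, In z P /\ lt z y0).
        { apply NNPP; intro Hn. apply Hnm. intros z Hz Hl'. apply Hn; eauto. }
        destruct H as [z [Hz Hzy]].
        destruct (min_below P HD z Hz) as [x [Hx [Hxz Hxm]]].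
        assert (Dy0 : D y0) by (apply HD1; auto).
        assert (Hxy0 : lt x y0).
        { destruct Hxz as [E|E]; [subst z; auto| apply (Htr x z y0); auto]. }
        assert (HxM : In x M) by (apply filt_In; auto).
        assert (HxS1 : ~ In x S1).
        { intro H. apply Hi1 in H. apply filt_In in H. tauto. }
        assert (Hch : chain (x :: S1)).
        { intros a b Ha Hb Hab. destruct Ha as [<-|Ha]; destruct Hb as [<-|Hb].
          - tauto.
          - left. destruct (Hy0m b Hb) as [->|H]; auto. apply (Htr x y0 b); auto.
          - right. destruct (Hy0m a Ha) as [->|H]; auto. apply (Htr x y0 a); auto.
          - apply Hc1; auto. }
        assert (Hinc : incl (x::S1) P).
        { intros a [<-|Ha]; auto. apply Hi1 in Ha. apply filt_In in Ha; tauto. }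
        destruct (Compare_dec.le_lt_dec (length M) (length S2)).
        -- exists (x::S1), S2. repeat split; auto.
           ++ constructor; auto.
           ++ intros a Ha. apply Hi2 in Ha. apply filt_In in Ha; tauto.
           ++ simpl. nia.
        -- exists (x::S1), M. repeat split; auto.
           ++ constructor; auto.
           ++ simpl. nia.
Qed.

Lemma mirsky : forall P, NoDup P -> (forall x, In x P -> D x) ->
  exists S1 S2, incl S1 P /\ NoDup S1 /\ chain S1 /\ incl S2 P /\ NoDup S2 /\ antichain S2 /\
    length P <= length S1 * length S2.
Proof. intros; eapply mirsky_aux; eauto. Qed.
End Mirsky.

Open Scope R_scope.

Definition cstr := ((R*R)*(R*R))%type.
Definition mem (c : cstr) (p : R*R) : Prop :=
  fst (fst c) * (fst p - fst (snd c)) + snd (fst c) * (snd p - snd (snd c)) >= 0.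

Definition wz (l1 l2 l3 l4 : R) (x1 x2 x3 x4 : R*R) : R*R :=
  ((l1*fst x1 + l2*fst x2 + l3*fst x3 + l4*fst x4)/(l1+l2+l3+l4),
   (l1*snd x1 + l2*snd x2 + l3*snd x3 + l4*snd x4)/(l1+l2+l3+l4)).

Lemma sq_pos (x : R) : x <> 0 -> x * x > 0.
Proof. intros H. destruct (Rlt_or_le x 0); [nra|]. destruct H0; [nra|congruence]. Qed.

Lemma term_nonneg (l f : R) : 0 <= l -> (0 < l -> f >= 0) -> 0 <= l * f.
Proof. intros H1 H2. destruct (Rle_lt_or_eq_dec 0 l H1) as [H|H].
  - specialize (H2 H). nra.
  - subst. lra. Qed.

Lemma wcomb l1 l2 l3 l4 x1 x2 x3 x4 c :
  0 <= l1 -> 0 <= l2 -> 0 <= l3 -> 0 <= l4 -> 0 < l1+l2+l3+l4 ->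
  (0 < l1 -> mem c x1) -> (0 < l2 -> mem c x2) -> (0 < l3 -> mem c x3) -> (0 < l4 -> mem c x4) ->
  mem c (wz l1 l2 l3 l4 x1 x2 x3 x4).
Proof.
  intros H1 H2 H3 H4 HL M1 M2 M3 M4. unfold mem in *. unfold wz; simpl.
  destruct c as [[n1 n2] [y1 y2]]; simpl in *.
  set (L := l1+l2+l3+l4) in *.
  set (f := fun p : R*R => n1 * (fst p - y1) + n2 * (snd p - y2)).
  assert (E : n1 * ((l1 * fst x1 + l2 * fst x2 + l3 * fst x3 + l4 * fst x4) / L - y1) +
    n2 * ((l1 * snd x1 + l2 * snd x2 + l3 * snd x3 + l4 * snd x4) / L - y2)
    = (l1 * f x1 + l2 * f x2 + l3 * f x3 + l4 * f x4) / L).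
  { unfold f, L in *. field. lra. }
  rewrite E. apply Rle_ge. unfold Rdiv. apply Rmult_le_pos; [|left; apply Rinv_0_lt_compat; lra].
  pose proof (term_nonneg l1 (f x1) H1 M1). pose proof (term_nonneg l2 (f x2) H2 M2).
  pose proof (term_nonneg l3 (f x3) H3 M3). pose proof (term_nonneg l4 (f x4) H4 M4). lra.
Qed.

Definition D3 (a b c : R*R) := (fst b - fst a)*(snd c - snd a) - (snd b - snd a)*(fst c - fst a).

Lemma radon_mu (x1 x2 x3 x4 : R*R) : exists m1 m2 m3 m4,
  ~ (m1 = 0 /\ m2 = 0 /\ m3 = 0 /\ m4 = 0) /\ m1+m2+m3+m4 = 0 /\
  m1*fst x1+m2*fst x2+m3*fst x3+m4*fst x4 = 0 /\ m1*snd x1+m2*snd x2+m3*snd x3+m4*snd x4 = 0.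
Proof.
  destruct x1 as [a1 b1], x2 as [a2 b2], x3 as [a3 b3], x4 as [a4 b4]; simpl.
  destruct (classic (D3 (a2,b2) (a3,b3) (a4,b4) = 0 /\ D3 (a1,b1) (a3,b3) (a4,b4) = 0 /\
     D3 (a1,b1) (a2,b2) (a4,b4) = 0 /\ D3 (a1,b1) (a2,b2) (a3,b3) = 0)) as [Hz|Hnz].
  - destruct Hz as [_ [_ [_ Hz]]]. unfold D3 in Hz; simpl in Hz.
    destruct (classic (a1 = a2 /\ b1 = b2)) as [[-> ->]|Hne].
    + exists 1, (-1), 0, 0. repeat split; try lra.
    + set (dx := a2 - a1). set (dy := b2 - b1).
      exists ((a3-a2)*dx + (b3-b2)*dy), ((a1-a3)*dx+(b1-b3)*dy), (dx*dx+dy*dy), 0.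
      assert (Hp : dx*dx+dy*dy > 0).
      { unfold dx, dy. destruct (classic (a1 = a2)).
        - assert (b1 <> b2) by tauto. assert (b2 - b1 <> 0) by (intro; apply H0; lra). pose proof (sq_pos _ H1). pose proof (Rle_0_sqr (a2 - a1)); unfold Rsqr in *; lra.
        - assert (a2 - a1 <> 0) by (intro; apply H; lra). pose proof (sq_pos _ H0). pose proof (Rle_0_sqr (b2 - b1)); unfold Rsqr in *; lra. }
      repeat split; try lra.
      * unfold dx, dy. ring.
      * transitivity (- dy * ((a2 - a1) * (b3 - b1) - (b2 - b1) * (a3 - a1))).
        { unfold dx, dy. ring. } rewrite Hz. ring.
      * transitivity (dx * ((a2 - a1) * (b3 - b1) - (b2 - b1) * (a3 - a1))).
        { unfold dx, dy. ring. } rewrite Hz. ring.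
  - exists (D3 (a2,b2) (a3,b3) (a4,b4)), (- D3 (a1,b1) (a3,b3) (a4,b4)),
      (D3 (a1,b1) (a2,b2) (a4,b4)), (- D3 (a1,b1) (a2,b2) (a3,b3)).
    repeat split.
    + intros [h1 [h2 [h3 h4]]]. apply Hnz. repeat split; lra.
    + unfold D3; simpl; ring.
    + unfold D3; simpl; ring.
    + unfold D3; simpl; ring.
Qed.

Lemma max_split (m : R) : Rmax m 0 - Rmax (-m) 0 = m.
Proof. unfold Rmax. destruct (Rle_dec m 0); destruct (Rle_dec (-m) 0); lra. Qed.
Lemma max_nn (m : R) : 0 <= Rmax m 0.
Proof. unfold Rmax; destruct (Rle_dec m 0); lra. Qed.
Lemma max_pos (m : R) : 0 < Rmax m 0 -> 0 < m.
Proof. unfold Rmax; destruct (Rle_dec m 0); lra. Qed.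

Lemma radon (x1 x2 x3 x4 : R*R) : exists m1 m2 m3 m4 z,
  (forall c, (0 < m1 -> mem c x1) -> (0 < m2 -> mem c x2) -> (0 < m3 -> mem c x3) -> (0 < m4 -> mem c x4) -> mem c z) /\
  (forall c, (m1 <= 0 -> mem c x1) -> (m2 <= 0 -> mem c x2) -> (m3 <= 0 -> mem c x3) -> (m4 <= 0 -> mem c x4) -> mem c z).
Proof.
  destruct (radon_mu x1 x2 x3 x4) as [m1 [m2 [m3 [m4 [Hnz [Hs [Hx Hy]]]]]]].
  pose proof (max_split m1). pose proof (max_split m2). pose proof (max_split m3). pose proof (max_split m4).
  pose proof (max_nn m1). pose proof (max_nn m2). pose proof (max_nn m3). pose proof (max_nn m4).
  pose proof (max_nn (-m1)). pose proof (max_nn (-m2)). pose proof (max_nn (-m3)). pose proof (max_nn (-m4)).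
  set (p1 := Rmax m1 0) in *. set (p2 := Rmax m2 0) in *. set (p3 := Rmax m3 0) in *. set (p4 := Rmax m4 0) in *.
  set (q1 := Rmax (-m1) 0) in *. set (q2 := Rmax (-m2) 0) in *. set (q3 := Rmax (-m3) 0) in *. set (q4 := Rmax (-m4) 0) in *.
  assert (HL : 0 < p1+p2+p3+p4).
  { destruct (Rle_lt_or_eq_dec 0 (p1+p2+p3+p4)) as [h|h]; [lra|auto|].
    exfalso. assert (p1 = 0 /\ p2 = 0 /\ p3 = 0 /\ p4 = 0) by lra.
    assert (q1+q2+q3+q4 = 0) by lra. apply Hnz. lra. }
  exists m1, m2, m3, m4, (wz p1 p2 p3 p4 x1 x2 x3 x4). split.
  - intros c C1 C2 C3 C4. apply wcomb; auto; intro h; apply max_pos in h; auto.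
  - intros c C1 C2 C3 C4.
    assert (E : wz p1 p2 p3 p4 x1 x2 x3 x4 = wz q1 q2 q3 q4 x1 x2 x3 x4).
    { unfold wz. assert (q1+q2+q3+q4 = p1+p2+p3+p4) by lra. rewrite H11. f_equal.
      - f_equal. rewrite <- H, <- H0, <- H1, <- H2 in Hx. lra.
      - f_equal. rewrite <- H, <- H0, <- H1, <- H2 in Hy. lra. }
    rewrite E. apply wcomb; auto; try lra;
    intro h; apply max_pos in h; [apply C1|apply C2|apply C3|apply C4]; lra.
Qed.

Definition triples_ok (F : list cstr) := forall c1 c2 c3, In c1 F -> In c2 F -> In c3 F ->
  exists p, mem c1 p /\ mem c2 p /\ mem c3 p.

Lemma triples_sub F G : incl G F -> triples_ok F -> triples_ok G.
Proof. intros HI H c1 c2 c3 h1 h2 h3. apply H; auto. Qed.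

Lemma helly_aux : forall k (F : list cstr), (length F <= k)%nat -> triples_ok F ->
  exists p, forall c, In c F -> mem c p.
Proof.
  induction k as [|k IH]; intros F HL HT.
  - destruct F; [|simpl in HL; lia]. exists (0,0); intros c [].
  - destruct F as [|c1 [|c2 [|c3 [|c4 R]]]].
    + exists (0,0); intros c [].
    + destruct (HT c1 c1 c1) as [p [h _]]; simpl; auto. exists p. intros c [<-|[]]; auto.
    + destruct (HT c1 c2 c2) as [p [h1 [h2 _]]]; simpl; auto. exists p. intros c [<-|[<-|[]]]; auto.
    + destruct (HT c1 c2 c3) as [p [h1 [h2 h3]]]; simpl; auto. exists p. intros c [<-|[<-|[<-|[]]]]; auto.
    + simpl in HL.
      destruct (IH (c2::c3::c4::R)) as [x1 H1]; [simpl; lia| eapply triples_sub; [|exact HT]; intros z hz; simpl in *; tauto|].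
      destruct (IH (c1::c3::c4::R)) as [x2 H2]; [simpl; lia| eapply triples_sub; [|exact HT]; intros z hz; simpl in *; tauto|].
      destruct (IH (c1::c2::c4::R)) as [x3 H3]; [simpl; lia| eapply triples_sub; [|exact HT]; intros z hz; simpl in *; tauto|].
      destruct (IH (c1::c2::c3::R)) as [x4 H4]; [simpl; lia| eapply triples_sub; [|exact HT]; intros z hz; simpl in *; tauto|].
      destruct (radon x1 x2 x3 x4) as [m1 [m2 [m3 [m4 [z [Z1 Z2]]]]]].
      exists z. intros c Hc.
      assert (N1 : ~ mem c x1 -> ~ In c (c2::c3::c4::R)) by (intros h h'; apply h; auto).
      assert (N2 : ~ mem c x2 -> ~ In c (c1::c3::c4::R)) by (intros h h'; apply h; auto).
      assert (N3 : ~ mem c x3 -> ~ In c (c1::c2::c4::R)) by (intros h h'; apply h; auto).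
      assert (N4 : ~ mem c x4 -> ~ In c (c1::c2::c3::R)) by (intros h h'; apply h; auto).
      simpl in N1, N2, N3, N4, Hc.
      destruct (classic (mem c x1)) as [B1|B1]; destruct (classic (mem c x2)) as [B2|B2];
      destruct (classic (mem c x3)) as [B3|B3]; destruct (classic (mem c x4)) as [B4|B4];
      try (exfalso; tauto);
      try (apply Z1; intros; assumption);
      match goal with
      | B : ~ mem c x1 |- _ => destruct (Rlt_or_le 0 m1)
      | B : ~ mem c x2 |- _ => destruct (Rlt_or_le 0 m2)
      | B : ~ mem c x3 |- _ => destruct (Rlt_or_le 0 m3)
      | B : ~ mem c x4 |- _ => destruct (Rlt_or_le 0 m4)
      end;
      first [apply Z2; intros; first [assumption | lra]
            | apply Z1; intros; first [assumption | lra]].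
Qed.

Lemma helly (F : list cstr) : triples_ok F -> exists p, forall c, In c F -> mem c p.
Proof. intros; eapply helly_aux; eauto. Qed.

Definition dot (a w : R*R) := fst a * fst w + snd a * snd w.
Definition perp (w : R*R) : R*R := (- snd w, fst w).
Definition vneg (w : R*R) : R*R := (- fst w, - snd w).
Definition Cand (W : list (R*R)) : list (R*R) :=
  [(1,0);(-1,0);(0,1);(0,-1)] ++ flat_map (fun w => [perp w; vneg (perp w)]) W.

Lemma Cand_mono w W n : In n (Cand W) -> In n (Cand (w::W)).
Proof. unfold Cand. intros H. apply in_app_or in H. apply in_or_app. destruct H; [auto|].
  right. simpl. right. right. auto. Qed.


Lemma decomp m w x : dot w w * dot m x = dot m (perp w) * dot (perp w) x + dot m w * dot w x.
Proof. unfold dot, perp; simpl; ring. Qed.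

Lemma farkas : forall W r a, (forall w, In w W -> dot a w >= 0) -> dot a r < 0 ->
  exists n, In n (Cand W) /\ (forall w, In w W -> dot n w >= 0) /\ dot n r < 0.
Proof.
  induction W as [|w W IH]; intros r a HW Hr.
  - destruct r as [r1 r2]. unfold dot in *; simpl in *.
    destruct (Rlt_or_le 0 r1). { exists (-1,0). split; [simpl; tauto|]. split; [intros _ []|]. simpl; lra. }
    destruct (Rlt_or_le r1 0). { exists (1,0). split; [simpl; tauto|]. split; [intros _ []|]. simpl; lra. }
    assert (r1 = 0) by lra. subst r1.
    destruct (Rlt_or_le 0 r2). { exists (0,-1). split; [simpl; tauto|]. split; [intros _ []|]. simpl; lra. }
    destruct (Rlt_or_le r2 0). { exists (0,1). split; [simpl; tauto|]. split; [intros _ []|]. simpl; lra. }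
    exfalso. assert (r2 = 0) by lra. subst. lra.
  - destruct (IH r a) as [n' [Hn' [HW' Hr']]]; [intros; apply HW; simpl; auto|auto|].
    destruct (Rle_or_lt 0 (dot n' w)) as [Hw|Hw].
    + exists n'. split; [apply Cand_mono; auto|]. split; auto.
      intros w0 [<-|h]; [lra|auto].
    + assert (Haw : dot a w >= 0) by (apply HW; simpl; auto).
      set (m := (dot a w * fst n' - dot n' w * fst a, dot a w * snd n' - dot n' w * snd a)).
      assert (Hm : forall x, dot m x = dot a w * dot n' x - dot n' w * dot a x).
      { intros x. unfold m, dot; simpl. ring. }
      assert (Hmw : dot m w = 0) by (rewrite Hm; ring).
      assert (Hmr : dot m r < 0).
      { rewrite Hm. assert (dot a w * dot n' r <= 0) by nra. assert (dot n' w * dot a r > 0) by nra. lra. }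
      assert (HmW : forall x, In x W -> dot m x >= 0).
      { intros x hx. rewrite Hm. pose proof (HW' x hx). assert (dot a x >= 0) by (apply HW; simpl; auto). nra. }
      set (sg := dot m (perp w)).
      assert (Hdec : forall x, (dot w w) * dot m x = sg * dot (perp w) x).
      { intros x. unfold sg. rewrite (decomp m w x), Hmw. ring. }
      assert (Hww : dot w w > 0).
      { destruct w as [w1 w2]. unfold dot in *; simpl in *.
        destruct (classic (w1 = 0)); destruct (classic (w2 = 0)).
        - subst. lra.
        - pose proof (sq_pos w2 H0). nra.
        - pose proof (sq_pos w1 H). nra.
        - pose proof (sq_pos w1 H). nra. }
      assert (Hvn : forall x, dot (vneg (perp w)) x = - dot (perp w) x) by (intros; unfold dot, vneg; simpl; ring).
      destruct (Rtotal_order sg 0) as [Hs|[Hs|Hs]].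
      * exists (vneg (perp w)). split.
        { unfold Cand. apply in_or_app. right. simpl. auto. }
        split.
        -- intros x [<-|hx].
           ++ rewrite Hvn. unfold dot, perp; simpl. lra.
           ++ rewrite Hvn. pose proof (Hdec x). pose proof (HmW x hx). nra.
        -- rewrite Hvn. pose proof (Hdec r). nra.
      * exfalso. pose proof (Hdec r). rewrite Hs in H. nra.
      * exists (perp w). split.
        { unfold Cand. apply in_or_app. right. simpl. auto. }
        split.
        -- intros x [<-|hx].
           ++ unfold dot, perp; simpl. lra.
           ++ pose proof (Hdec x). pose proof (HmW x hx). nra.
        -- pose proof (Hdec r). nra.
Qed.

Lemma sq_pos' (x : R) : x <> 0 -> x * x > 0.
Proof. intros H. destruct (Rlt_or_le x 0); [nra|]. destruct H0; [nra|congruence]. Qed.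

Definition lineq (t : R*R*R) (p : point) := fst (fst t) * fst p + snd (fst t) * snd p = snd t.

Lemma ex_coef (L : point -> Prop) : exists t : R*R*R, is_line L ->
  (fst (fst t) <> 0 \/ snd (fst t) <> 0) /\ forall p, L p <-> lineq t p.
Proof.
  destruct (classic (is_line L)) as [[a [b [c [H1 H2]]]]|H].
  - exists (a,b,c). intros _. split; auto.
  - exists (0,0,0). intro; contradiction.
Qed.
Definition coef (L : point -> Prop) : R*R*R := proj1_sig (constructive_indefinite_description _ (ex_coef L)).
Lemma coef_spec L : is_line L -> (fst (fst (coef L)) <> 0 \/ snd (fst (coef L)) <> 0) /\ forall p, L p <-> lineq (coef L) p.
Proof. unfold coef. destruct (constructive_indefinite_description _ _) as [t Ht]. exact Ht. Qed.

Lemma pred_ext (L1 L2 : point -> Prop) : (forall p, L1 p <-> L2 p) -> L1 = L2.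
Proof. intros H. apply functional_extensionality. intros p. apply propositional_extensionality. auto. Qed.

Section Class.
Variables n1 n2 y1 y2 : R.
Definition sf (p : point) := n1 * (fst p - y1) + n2 * (snd p - y2).
Definition tauf (p : point) := - n2 * fst p + n1 * snd p.
Definition ca L := fst (fst (coef L)).
Definition cb L := snd (fst (coef L)).
Definition cc L := snd (coef L).
Definition Bf L := cb L * n1 - ca L * n2.
Definition Kf L := ca L * n1 + cb L * n2.
Definition Nn := n1 * n1 + n2 * n2.
Definition Mf L := Nn * cc L - Kf L * (n1 * y1 + n2 * y2).
Definition tk L := Mf L / Bf L.
Definition uk L := Kf L / Bf L.

Lemma onL L p : is_line L -> Nn > 0 -> (L p <-> Bf L * tauf p + Kf L * sf p = Mf L).
Proof.
  intros HL HN. destruct (coef_spec L HL) as [_ H]. rewrite H. unfold lineq.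
  assert (E : Bf L * tauf p + Kf L * sf p - Mf L = Nn * (ca L * fst p + cb L * snd p - cc L)).
  { unfold Mf, Bf, Kf, tauf, sf, Nn. ring. }
  unfold ca, cb, cc in E. split; intro h.
  - assert (Bf L * tauf p + Kf L * sf p - Mf L = 0) by (rewrite E, h; ring). lra.
  - assert (Nn * (fst (fst (coef L)) * fst p + snd (fst (coef L)) * snd p - snd (coef L)) = 0) by lra.
    apply Rmult_integral in H0. destruct H0; lra.
Qed.

Lemma BK_nz L : is_line L -> Nn > 0 -> Bf L * Bf L + Kf L * Kf L > 0.
Proof.
  intros HL HN. destruct (coef_spec L HL) as [H _].
  assert (E : Bf L * Bf L + Kf L * Kf L = Nn * (ca L * ca L + cb L * cb L)) by (unfold Bf, Kf, Nn; ring).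
  rewrite E. unfold ca, cb. destruct H as [H|H]; pose proof (sq_pos' _ H);
  [pose proof (Rle_0_sqr (snd (fst (coef L))))|pose proof (Rle_0_sqr (fst (fst (coef L))))]; unfold Rsqr in *; nra.
Qed.

Lemma onNP L p : is_line L -> Nn > 0 -> Bf L <> 0 -> (L p <-> tauf p + uk L * sf p = tk L).
Proof.
  intros HL HN HB. rewrite (onL L p HL HN). unfold uk, tk. split; intro h.
  - rewrite <- h. field. auto.
  - assert (E : Mf L = Bf L * (Mf L / Bf L)) by (field; auto). rewrite E, <- h. field. auto.
Qed.

Lemma onPar L p : is_line L -> Nn > 0 -> Bf L = 0 -> (L p <-> sf p = Mf L / Kf L).
Proof.
  intros HL HN HB. pose proof (BK_nz L HL HN). rewrite HB in H.
  assert (HK : Kf L <> 0) by (intro h; rewrite h in H; lra).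
  rewrite (onL L p HL HN), HB. split; intro h.
  - rewrite <- h. field. auto.
  - rewrite h. field. auto.
Qed.

Lemma key_inj L L' : is_line L -> is_line L' -> Nn > 0 -> Bf L <> 0 -> Bf L' <> 0 ->
  tk L = tk L' -> uk L = uk L' -> L = L'.
Proof.
  intros. apply pred_ext. intros p. rewrite (onNP L p), (onNP L' p); auto. rewrite H4, H5. tauto.
Qed.

Definition ltk (L L' : point -> Prop) := L <> L' /\ tk L <= tk L' /\ uk L <= uk L'.

Lemma class_lemma (Oj : point -> Prop) (C : list (point -> Prop)) :
  (forall L, In L C -> is_line L) -> NoDup C ->
  (forall L, In L C -> forall p, L p -> sf p < 0 \/ Oj p) ->
  exists S, incl S C /\ NoDup S /\ (length C <= length S * length S)%nat /\
    ((forall p, V S p -> sf p < 0) \/ (forall p, V S p -> Oj p)).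
Proof.
  intros HL HC Hcl.
  destruct (classic (n1 = 0 /\ n2 = 0)) as [[Z1 Z2]|HN0].
  { exists C. split; [intros x; auto|]. split; auto. split; [nia|]. right.
    intros p [l1 [l2 [h1 [h2 [h3 [h4 h5]]]]]]. destruct (Hcl l1 h1 p h4); auto.
    unfold sf in H. rewrite Z1, Z2 in H. lra. }
  assert (HN : Nn > 0).
  { unfold Nn. destruct (classic (n1 = 0)).
    - assert (n2 <> 0) by tauto. pose proof (sq_pos' _ H0). rewrite H. lra.
    - pose proof (sq_pos' _ H). pose proof (Rle_0_sqr n2). unfold Rsqr in *. lra. }
  set (NP := filt (fun L => Bf L <> 0) C).
  set (Par := filt (fun L => ~ Bf L <> 0) C).
  set (Pin := filt (fun L => forall p, L p -> sf p < 0) Par).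
  set (Pout := filt (fun L => ~ forall p, L p -> sf p < 0) Par).
  assert (E1 : (length NP + length Par)%nat = length C) by apply filt_len.
  assert (E2 : (length Pin + length Pout)%nat = length Par) by apply filt_len.
  assert (HNP : forall L, In L NP <-> In L C /\ Bf L <> 0) by (intros L; exact (filt_In (fun L => Bf L <> 0) C L)).
  assert (HPar : forall L, In L Par <-> In L C /\ ~ Bf L <> 0) by (intros L; exact (filt_In (fun L => ~ Bf L <> 0) C L)).
  assert (HPin : forall L, In L Pin <-> In L Par /\ forall p, L p -> sf p < 0) by (intros L; exact (filt_In (fun L => forall p, L p -> sf p < 0) Par L)).
  assert (HPout : forall L, In L Pout <-> In L Par /\ ~ forall p, L p -> sf p < 0) by (intros L; exact (filt_In (fun L => ~ forall p, L p -> sf p < 0) Par L)).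
  assert (Htr : forall x y z, In x NP -> In y NP -> In z NP -> ltk x y -> ltk y z -> ltk x z).
  { intros x y z hx hy hz [a1 [a2 a3]] [b1 [b2 b3]]. split; [|split; lra].
    intro E. subst z. apply a1. apply HNP in hx. apply HNP in hy.
    apply key_inj; try tauto; try apply HL; try tauto; lra. }
  assert (Hirr : forall x, In x NP -> ~ ltk x x) by (intros x _ [h _]; auto).
  destruct (mirsky (point -> Prop) ltk (fun L => In L NP) Hirr Htr NP (filt_NoDup _ _ HC) (fun x h => h))
    as [S1 [S2 [Hi1 [Hn1 [Hc1 [Hi2 [Hn2 [Ha2 Hl]]]]]]]].
  destruct NP as [|L0 NP0] eqn:ENP.
  - (* all parallel *)
    exists C. split; [intros x; auto|]. split; auto. split; [nia|]. left.
    intros p [l1 [l2 [h1 [h2 [h3 [h4 h5]]]]]]. exfalso. apply h3.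
    assert (Bf l1 = 0). { apply NNPP. intro hb. assert (In l1 []) by (apply HNP; auto). auto. }
    assert (Bf l2 = 0). { apply NNPP. intro hb. assert (In l2 []) by (apply HNP; auto). auto. }
    apply pred_ext. intros x. rewrite (onPar l1 x), (onPar l2 x); auto.
    rewrite (onPar l1 p) in h4; auto. rewrite (onPar l2 p) in h5; auto. rewrite <- h4, <- h5. tauto.
  - rewrite <- ENP in *.
    assert (HNPl : (length NP >= 1)%nat) by (rewrite ENP; simpl; lia).
    assert (HS1 : (length S1 >= 1)%nat) by (destruct S1; simpl in *; nia).
    assert (HS2 : (length S2 >= 1)%nat) by (destruct S2; simpl in *; nia).
    set (G := S2 ++ Pin). set (Bd := S1 ++ Pout).
    assert (HG : incl G C /\ NoDup G /\ forall p, V G p -> sf p < 0).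
    { split; [|split].
      - intros x hx. apply in_app_or in hx. destruct hx as [hx|hx].
        + apply Hi2 in hx. apply HNP in hx; tauto.
        + apply HPin in hx. destruct hx as [hx _]. apply HPar in hx; tauto.
      - apply NoDup_app; auto. apply filt_NoDup. apply filt_NoDup; auto.
        intros a ha hb. apply Hi2 in ha. apply HNP in ha. apply HPin in hb. destruct hb as [hb _]. apply HPar in hb. tauto.
      - intros p [l1 [l2 [h1 [h2 [h3 [h4 h5]]]]]].
        apply in_app_or in h1, h2.
        destruct h1 as [h1|h1]; [|apply HPin in h1; apply h1; auto].
        destruct h2 as [h2|h2]; [|apply HPin in h2; apply h2; auto].
        pose proof (Ha2 l1 l2 h1 h2 h3) as n12. pose proof (Ha2 l2 l1 h2 h1 (not_eq_sym h3)) as n21.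
        apply Hi2, HNP in h1. apply Hi2, HNP in h2.
        rewrite (onNP l1 p) in h4; try apply HL; try tauto.
        rewrite (onNP l2 p) in h5; try apply HL; try tauto.
        unfold ltk in n12, n21.
        assert (Hs : sf p * (uk l1 - uk l2) = tk l1 - tk l2) by lra.
        destruct (Rlt_or_le (tk l1) (tk l2)); destruct (Rlt_or_le (uk l1) (uk l2)).
        + exfalso. apply n12. split; auto. lra.
        + assert (uk l2 < uk l1). { destruct H0; auto. exfalso. apply n12. split; auto; lra. } nra.
        + assert (tk l2 < tk l1). { destruct H; auto. exfalso. apply n12. split; auto; lra. } nra.
        + exfalso. apply n21. split; auto. }
    assert (HB : incl Bd C /\ NoDup Bd /\ forall p, V Bd p -> Oj p).
    { split; [|split].
      - intros x hx. apply in_app_or in hx. destruct hx as [hx|hx].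
        + apply Hi1 in hx. apply HNP in hx; tauto.
        + apply HPout in hx. destruct hx as [hx _]. apply HPar in hx; tauto.
      - apply NoDup_app; auto. apply filt_NoDup. apply filt_NoDup; auto.
        intros a ha hb. apply Hi1 in ha. apply HNP in ha. apply HPout in hb. destruct hb as [hb _]. apply HPar in hb. tauto.
      - assert (Pout_ok : forall l p, In l Pout -> l p -> Oj p).
        { intros l p hl hp. apply HPout in hl. destruct hl as [hl1 hl2]. apply HPar in hl1.
          assert (hb : Bf l = 0) by (apply NNPP; tauto).
          assert (exists x, l x /\ sf x >= 0).
          { apply NNPP. intro hn. apply hl2. intros x hx. apply Rnot_le_lt. intro. apply hn. exists x. split; auto. lra. }
          destruct H as [x [hx hsx]].
          destruct (Hcl l (proj1 hl1) p hp) as [h|h]; auto. exfalso.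
          rewrite (onPar l p) in hp; try apply HL; try tauto. rewrite (onPar l x) in hx; try apply HL; try tauto. lra. }
        intros p [l1 [l2 [h1 [h2 [h3 [h4 h5]]]]]].
        apply in_app_or in h1, h2.
        destruct h1 as [h1|h1]; [|eapply Pout_ok; eauto].
        destruct h2 as [h2|h2]; [|eapply Pout_ok; eauto].
        destruct (Hcl l1 ltac:(apply Hi1, HNP in h1; tauto) p h4) as [hs|hs]; auto. exfalso.
        pose proof (Hc1 l1 l2 h1 h2 h3) as c12.
        apply Hi1, HNP in h1. apply Hi1, HNP in h2.
        rewrite (onNP l1 p) in h4; try apply HL; try tauto.
        rewrite (onNP l2 p) in h5; try apply HL; try tauto.
        assert (Hs : sf p * (uk l1 - uk l2) = tk l1 - tk l2) by lra.
        destruct (classic (uk l1 = uk l2)) as [Eu|Eu].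
        + apply h3. apply key_inj; try apply HL; try tauto. rewrite Eu in Hs. lra.
        + assert (uk l1 - uk l2 <> 0) by (intro; apply Eu; lra).
          pose proof (sq_pos' _ H). unfold ltk in c12.
          destruct c12 as [[_ [c1 c2]]|[_ [c1 c2]]]; nra. }
    destruct HG as [HG1 [HG2 HG3]]. destruct HB as [HB1 [HB2 HB3]].
    assert (Lg : length G = (length S2 + length Pin)%nat) by apply length_app.
    assert (Lb : length Bd = (length S1 + length Pout)%nat) by apply length_app.
    destruct (Compare_dec.le_lt_dec (length Bd) (length G)).
    + exists G. split; auto. split; auto. split; [nia|]. left; auto.
    + exists Bd. split; auto. split; auto. split; [nia|]. right; auto.
Qed.
End Class.

Definition Oh (c : cstr) (p : point) := sf (fst (fst c)) (snd (fst c)) (fst (snd c)) (snd (snd c)) p < 0.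

Lemma between (E F la lb lm : R) : E + F * la >= 0 -> E + F * lb >= 0 ->
  ((la <= lm <= lb) \/ (lb <= lm <= la)) -> E + F * lm >= 0.
Proof.
  intros h1 h2 h3.
  assert (Id : (E + F*lm) * (lb - la) = (lb - lm) * (E + F*la) + (lm - la) * (E + F*lb)) by ring.
  destruct h3 as [[h3 h4]|[h3 h4]].
  - destruct (Req_dec la lb). { subst. assert (lm = lb) by lra. subst; auto. }
    assert (0 <= (lb - lm) * (E + F*la)) by nra. assert (0 <= (lm - la) * (E + F*lb)) by nra. nra.
  - destruct (Req_dec la lb). { subst. assert (lm = lb) by lra. subst; auto. }
    assert (0 <= (lm - lb) * (E + F*la)) by nra. assert (0 <= (la - lm) * (E + F*lb)) by nra. nra.
Qed.

Lemma aff_on_line (a b c al be ga : R) (p : point) : a * fst p + b * snd p = c ->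
  (a*a+b*b) * (al * fst p + be * snd p + ga) =
  (al * (a*c) + be * (b*c) + ga * (a*a+b*b)) + (- al * b + be * a) * (- b * fst p + a * snd p).
Proof. intros H. rewrite <- H. ring. Qed.

Lemma line_in_two (L : point -> Prop) (c1 c2 c3 : cstr) : is_line L ->
  (forall p, L p -> Oh c1 p \/ Oh c2 p \/ Oh c3 p) ->
  (forall p, L p -> Oh c1 p \/ Oh c2 p) \/ (forall p, L p -> Oh c1 p \/ Oh c3 p) \/ (forall p, L p -> Oh c2 p \/ Oh c3 p).
Proof.
  intros HL Hcov. apply NNPP. intro Hn.
  assert (e12 : exists p, L p /\ ~ Oh c1 p /\ ~ Oh c2 p).
  { apply NNPP; intro h. apply Hn. left. intros p hp. apply NNPP. intro h'. apply h. exists p. tauto. }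
  assert (e13 : exists p, L p /\ ~ Oh c1 p /\ ~ Oh c3 p).
  { apply NNPP; intro h. apply Hn. right; left. intros p hp. apply NNPP. intro h'. apply h. exists p. tauto. }
  assert (e23 : exists p, L p /\ ~ Oh c2 p /\ ~ Oh c3 p).
  { apply NNPP; intro h. apply Hn. right; right. intros p hp. apply NNPP. intro h'. apply h. exists p. tauto. }
  destruct e12 as [p [hp [h1p h2p]]]. destruct e13 as [q [hq [h1q h3q]]]. destruct e23 as [r [hr [h2r h3r]]].
  assert (h3p : Oh c3 p) by (destruct (Hcov p hp); tauto).
  assert (h2q : Oh c2 q) by (destruct (Hcov q hq); tauto).
  assert (h1r : Oh c1 r) by (destruct (Hcov r hr); tauto).
  destruct (coef_spec L HL) as [Hab Hon].
  apply Hon in hp, hq, hr. unfold lineq in hp, hq, hr.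
  set (a := fst (fst (coef L))) in *. set (b := snd (fst (coef L))) in *. set (c := snd (coef L)) in *.
  assert (HD : a*a+b*b > 0).
  { destruct Hab as [h|h]; pose proof (sq_pos' _ h); [pose proof (Rle_0_sqr b)|pose proof (Rle_0_sqr a)]; unfold Rsqr in *; lra. }
  unfold Oh, sf in *.
  destruct c1 as [[a1 b1] [u1 v1]], c2 as [[a2 b2] [u2 v2]], c3 as [[a3 b3] [u3 v3]]; simpl in *.
  set (lp := - b * fst p + a * snd p). set (lq := - b * fst q + a * snd q). set (lr := - b * fst r + a * snd r).
  assert (G : forall al be ga x, a * fst x + b * snd x = c ->
     (a*a+b*b) * (al * fst x + be * snd x + ga) =
     (al * (a*c) + be * (b*c) + ga * (a*a+b*b)) + (- al * b + be * a) * (- b * fst x + a * snd x)).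
  { intros. apply aff_on_line; auto. }
  assert (F1 : forall x, a * fst x + b * snd x = c -> (a*a+b*b) * (a1 * (fst x - u1) + b1 * (snd x - v1)) =
     (a1 * (a*c) + b1 * (b*c) + (-a1*u1-b1*v1) * (a*a+b*b)) + (- a1 * b + b1 * a) * (- b * fst x + a * snd x)).
  { intros x hx. rewrite <- G; auto. ring. }
  assert (F2 : forall x, a * fst x + b * snd x = c -> (a*a+b*b) * (a2 * (fst x - u2) + b2 * (snd x - v2)) =
     (a2 * (a*c) + b2 * (b*c) + (-a2*u2-b2*v2) * (a*a+b*b)) + (- a2 * b + b2 * a) * (- b * fst x + a * snd x)).
  { intros x hx. rewrite <- G; auto. ring. }
  assert (F3 : forall x, a * fst x + b * snd x = c -> (a*a+b*b) * (a3 * (fst x - u3) + b3 * (snd x - v3)) =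
     (a3 * (a*c) + b3 * (b*c) + (-a3*u3-b3*v3) * (a*a+b*b)) + (- a3 * b + b3 * a) * (- b * fst x + a * snd x)).
  { intros x hx. rewrite <- G; auto. ring. }
  pose proof (F1 p hp) as F1p. pose proof (F1 q hq) as F1q. pose proof (F1 r hr) as F1r.
  pose proof (F2 p hp) as F2p. pose proof (F2 q hq) as F2q. pose proof (F2 r hr) as F2r.
  pose proof (F3 p hp) as F3p. pose proof (F3 q hq) as F3q. pose proof (F3 r hr) as F3r.
  fold lp in F1p, F2p, F3p. fold lq in F1q, F2q, F3q. fold lr in F1r, F2r, F3r.
  set (E1 := a1 * (a*c) + b1 * (b*c) + (-a1*u1-b1*v1) * (a*a+b*b)) in *. set (K1 := - a1 * b + b1 * a) in *.
  set (E2 := a2 * (a*c) + b2 * (b*c) + (-a2*u2-b2*v2) * (a*a+b*b)) in *. set (K2 := - a2 * b + b2 * a) in *.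
  set (E3 := a3 * (a*c) + b3 * (b*c) + (-a3*u3-b3*v3) * (a*a+b*b)) in *. set (K3 := - a3 * b + b3 * a) in *.
  assert (P1p : E1 + K1 * lp >= 0) by (rewrite <- F1p; apply Rle_ge; apply Rmult_le_pos; lra).
  assert (P1q : E1 + K1 * lq >= 0) by (rewrite <- F1q; apply Rle_ge; apply Rmult_le_pos; lra).
  assert (P1r : E1 + K1 * lr < 0) by (rewrite <- F1r; nra).
  assert (P2p : E2 + K2 * lp >= 0) by (rewrite <- F2p; apply Rle_ge; apply Rmult_le_pos; lra).
  assert (P2r : E2 + K2 * lr >= 0) by (rewrite <- F2r; apply Rle_ge; apply Rmult_le_pos; lra).
  assert (P2q : E2 + K2 * lq < 0) by (rewrite <- F2q; nra).
  assert (P3q : E3 + K3 * lq >= 0) by (rewrite <- F3q; apply Rle_ge; apply Rmult_le_pos; lra).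
  assert (P3r : E3 + K3 * lr >= 0) by (rewrite <- F3r; apply Rle_ge; apply Rmult_le_pos; lra).
  assert (P3p : E3 + K3 * lp < 0) by (rewrite <- F3p; nra).
  destruct (Rle_or_lt lp lq); destruct (Rle_or_lt lq lr); destruct (Rle_or_lt lp lr).
  all: first
    [ assert (E1 + K1 * lr >= 0) by (apply (between E1 K1 lp lq lr); auto; lra); lra
    | assert (E2 + K2 * lq >= 0) by (apply (between E2 K2 lp lr lq); auto; lra); lra
    | assert (E3 + K3 * lp >= 0) by (apply (between E3 K3 lq lr lp); auto; lra); lra ].
Qed.

Definition ogood (A : list (point -> Prop)) (O : point -> Prop) :=
  exists S, incl S A /\ NoDup S /\ (length A <= 3 * (length S * length S))%nat /\ forall p, V S p -> O p.

Lemma cover3 (A : list (point -> Prop)) (c1 c2 c3 : cstr) :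
  (forall L, In L A -> is_line L) -> NoDup A -> (forall p, Oh c1 p \/ Oh c2 p \/ Oh c3 p) ->
  ogood A (Oh c1) \/ ogood A (Oh c2) \/ ogood A (Oh c3).
Proof.
  intros HL HA Hcov.
  set (C12 := filt (fun L => forall p, L p -> Oh c1 p \/ Oh c2 p) A).
  set (C13 := filt (fun L => forall p, L p -> Oh c1 p \/ Oh c3 p) A).
  set (C23 := filt (fun L => forall p, L p -> Oh c2 p \/ Oh c3 p) A).
  assert (H12 : forall L, In L C12 <-> In L A /\ forall p, L p -> Oh c1 p \/ Oh c2 p)
    by (intros L; exact (filt_In (fun L => forall p, L p -> Oh c1 p \/ Oh c2 p) A L)).
  assert (H13 : forall L, In L C13 <-> In L A /\ forall p, L p -> Oh c1 p \/ Oh c3 p)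
    by (intros L; exact (filt_In (fun L => forall p, L p -> Oh c1 p \/ Oh c3 p) A L)).
  assert (H23 : forall L, In L C23 <-> In L A /\ forall p, L p -> Oh c2 p \/ Oh c3 p)
    by (intros L; exact (filt_In (fun L => forall p, L p -> Oh c2 p \/ Oh c3 p) A L)).
  assert (Hinc : incl A (C12 ++ C13 ++ C23)).
  { intros L hL. destruct (line_in_two L c1 c2 c3 (HL L hL) (fun p _ => Hcov p)) as [h|[h|h]];
    apply in_or_app; [left; apply H12; auto|right; apply in_or_app; left; apply H13; auto|right; apply in_or_app; right; apply H23; auto]. }
  pose proof (NoDup_incl_length HA Hinc) as Hlen. rewrite !length_app in Hlen.
  assert (ND12 : NoDup C12) by (apply filt_NoDup; auto).
  assert (ND13 : NoDup C13) by (apply filt_NoDup; auto).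
  assert (ND23 : NoDup C23) by (apply filt_NoDup; auto).
  destruct c1 as [[a1 b1] [u1 v1]], c2 as [[a2 b2] [u2 v2]], c3 as [[a3 b3] [u3 v3]].
  unfold Oh in *; simpl in *.
  destruct (Compare_dec.le_lt_dec (length A) (3 * length C12)).
  - destruct (class_lemma a1 b1 u1 v1 (Oh ((a2,b2),(u2,v2))) C12) as [S [hS1 [hS2 [hS3 hS4]]]].
    + intros L hL; apply HL; apply H12; auto.
    + auto.
    + intros L hL. apply H12 in hL. apply hL.
    + assert (incl S A) by (intros x hx; apply H12; auto).
      destruct hS4 as [h|h]; [left|right; left]; exists S; repeat split; auto; nia.
  - destruct (Compare_dec.le_lt_dec (length A) (3 * length C13)).
    + destruct (class_lemma a1 b1 u1 v1 (Oh ((a3,b3),(u3,v3))) C13) as [S [hS1 [hS2 [hS3 hS4]]]].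
      * intros L hL; apply HL; apply H13; auto.
      * auto.
      * intros L hL. apply H13 in hL. apply hL.
      * assert (incl S A) by (intros x hx; apply H13; auto).
        destruct hS4 as [h|h]; [left|right; right]; exists S; repeat split; auto; nia.
    + destruct (class_lemma a2 b2 u2 v2 (Oh ((a3,b3),(u3,v3))) C23) as [S [hS1 [hS2 [hS3 hS4]]]].
      * intros L hL; apply HL; apply H23; auto.
      * auto.
      * intros L hL. apply H23 in hL. apply hL.
      * assert (incl S A) by (intros x hx; apply H23; auto).
        assert (length A <= 3 * length C23)%nat by lia.
        destruct hS4 as [h|h]; [right; left|right; right]; exists S; repeat split; auto; nia.
Qed.

Lemma two_lines_unique L1 L2 p p' : is_line L1 -> is_line L2 -> L1 <> L2 ->
  L1 p -> L2 p -> L1 p' -> L2 p' -> p = p'.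
Proof.
  intros H1 H2 Hne a1 a2 b1 b2. apply NNPP. intro Hpp. apply Hne.
  (* both lines equal the set of points x with cross(p'-p, x-p) = 0 *)
  assert (Key : forall L, is_line L -> L p -> L p' -> forall x, L x <-> (fst p' - fst p) * (snd x - snd p) - (snd p' - snd p) * (fst x - fst p) = 0).
  { intros L HL hp hp' x. destruct (coef_spec L HL) as [Hab Hon].
    rewrite Hon in hp, hp' |- *. unfold lineq in *.
    set (a := fst (fst (coef L))) in *. set (b := snd (fst (coef L))) in *. set (c := snd (coef L)) in *.
    set (u1 := fst p' - fst p). set (u2 := snd p' - snd p).
    assert (Hu : a * u1 + b * u2 = 0) by (unfold u1, u2; lra).
    assert (Hu0 : u1 <> 0 \/ u2 <> 0).
    { apply NNPP; intro h. apply Hpp. destruct p, p'; unfold u1, u2 in *; simpl in *. f_equal; apply NNPP; intro; apply h; [left|right]; lra. }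
    split; intro hx.
    - set (v1 := fst x - fst p). set (v2 := snd x - snd p).
      assert (Hv : a * v1 + b * v2 = 0) by (unfold v1, v2; lra).
      assert (a * (u1 * v2 - u2 * v1) = 0).
      { transitivity (v2 * (a*u1+b*u2) - u2 * (a*v1+b*v2)); [ring|rewrite Hu, Hv; ring]. }
      assert (b * (u1 * v2 - u2 * v1) = 0).
      { transitivity (- v1 * (a*u1+b*u2) + u1 * (a*v1+b*v2)); [ring|rewrite Hu, Hv; ring]. }
      destruct Hab as [h|h]; [apply Rmult_integral in H; destruct H; [contradiction|auto]|apply Rmult_integral in H0; destruct H0; [contradiction|auto]].
    - set (v1 := fst x - fst p). set (v2 := snd x - snd p). fold v1 v2 in hx.
      assert (a * v1 + b * v2 = 0).
      { destruct Hu0 as [h|h].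
        - apply (Rmult_eq_reg_l u1); auto. transitivity (v1 * (a*u1 + b*u2) + b * (u1*v2 - u2*v1)); [ring|].
          rewrite Hu, hx. ring.
        - apply (Rmult_eq_reg_l u2); auto. transitivity (v2 * (a*u1 + b*u2) - a * (u1*v2 - u2*v1)); [ring|].
          rewrite Hu, hx. ring. }
      unfold v1, v2 in H. lra. }
  apply pred_ext. intros x. rewrite (Key L1 H1 a1 b1 x), (Key L2 H2 a2 b2 x). tauto.
Qed.

Lemma fin_union {T : Type} (l : list T) (Q : T -> point -> Prop) :
  (forall x, In x l -> exists Lx, forall p, Q x p -> In p Lx) ->
  exists L, forall x p, In x l -> Q x p -> In p L.
Proof.
  induction l as [|a l IH]; intros H.
  - exists []. intros x p [].
  - destruct (H a (or_introl eq_refl)) as [La HLa].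
    destruct IH as [L HL]; [intros; apply H; simpl; auto|].
    exists (La ++ L). intros x p [<-|hx] hq; apply in_or_app; [left; auto|right; eauto].
Qed.

Lemma vlist (A : list (point -> Prop)) : (forall L, In L A -> is_line L) ->
  exists Vl, forall p, V A p -> In p Vl.
Proof.
  intros HL.
  destruct (fin_union A (fun l1 p => exists l2, In l2 A /\ l1 <> l2 /\ l1 p /\ l2 p)) as [Vl HV].
  - intros l1 h1.
    destruct (fin_union A (fun l2 p => l1 <> l2 /\ l1 p /\ l2 p)) as [L0 HL0].
    + intros l2 h2.
      destruct (classic (exists p0, l1 <> l2 /\ l1 p0 /\ l2 p0)) as [[p0 [n [a b]]]|hn].
      * exists [p0]. intros p [hp1 [hp2 hp3]]. left. symmetry. apply (two_lines_unique l1 l2); auto.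
      * exists []. intros p [hp1 [hp2 hp3]]. exfalso. apply hn. exists p. auto.
    + exists L0. intros p [l2 [h2 hh]]. apply (HL0 l2); auto.
  - exists Vl. intros p [l1 [l2 [h1 [h2 [h3 [h4 h5]]]]]]. apply (HV l1); auto. exists l2. auto.
Qed.

Lemma argmin (f : point -> R) (Y : list point) : Y <> [] -> exists y0, In y0 Y /\ forall y, In y Y -> f y0 <= f y.
Proof.
  induction Y as [|a Y IH]; intros H; [congruence|].
  destruct Y as [|b Y'].
  - exists a. split; [simpl; auto|]. intros y [<-|[]]; lra.
  - destruct IH as [y0 [h0 h1]]; [discriminate|].
    destruct (Rle_or_lt (f a) (f y0)).
    + exists a. split; [simpl; auto|]. intros y [<-|hy]; [lra|]. specialize (h1 y hy). lra.
    + exists y0. split; [simpl; auto|]. intros y [<-|hy]; [lra|auto].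
Qed.

Definition vsub (x y : point) : point := (fst x - fst y, snd x - snd y).

Lemma V_incl S A p : incl S A -> V S p -> V A p.
Proof. intros HI [l1 [l2 [h1 [h2 h]]]]. exists l1, l2. auto. Qed.

Lemma sqrt_conv (n m : nat) : (n <= 3 * (m * m))%nat -> sqrt (INR n / 3) <= INR m.
Proof.
  intros H. apply le_INR in H. rewrite mult_INR, mult_INR in H. simpl in H.
  assert (INR n / 3 <= INR m * INR m) by (unfold Rdiv; simpl in H; lra).
  rewrite <- (sqrt_square (INR m)) by apply pos_INR. apply sqrt_le_1_alt. auto.
Qed.

Theorem mainTheorem5 :
  forall A : list (point -> Prop),
    Forall is_line A -> NoDup A ->
    exists q : point,
      forall h : point -> Prop, is_closed_halfplane h -> h q ->
        exists A' : list (point -> Prop),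
          incl A' A /\ NoDup A' /\
          sqrt (INR (length A) / 3) <= INR (length A') /\
          (forall p : point, V A' p -> h p).
Proof.
  intros A HF HND.
  assert (HL : forall L, In L A -> is_line L) by (intros L hL; rewrite Forall_forall in HF; auto).
  destruct (vlist A HL) as [Vl HVl].
  set (Nl := [(1,0);(-1,0);(0,1);(0,-1)] ++
      flat_map (fun v => flat_map (fun w => [perp (vsub w v); vneg (perp (vsub w v))]) Vl) Vl).
  set (allc := list_prod Nl Vl).
  set (F := filt (fun c : cstr => ~ ogood A (Oh c)) allc).
  assert (HFi : forall c, In c F <-> In c allc /\ ~ ogood A (Oh c))
    by (intros c; exact (filt_In (fun c : cstr => ~ ogood A (Oh c)) allc c)).
  assert (memOh : forall c p, mem c p <-> ~ Oh c p).
  { intros [[n1 n2] [y1 y2]] p. unfold mem, Oh, sf; simpl. split; intro; lra. }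
  destruct (helly F) as [q Hq].
  { intros c1 c2 c3 h1 h2 h3. apply NNPP. intro hn.
    assert (Hcov : forall p, Oh c1 p \/ Oh c2 p \/ Oh c3 p).
    { intros p. apply NNPP. intro h. apply hn. exists p. rewrite !memOh. tauto. }
    destruct (cover3 A c1 c2 c3 HL HND Hcov) as [g|[g|g]];
    [apply HFi in h1|apply HFi in h2|apply HFi in h3]; tauto. }
  exists q. intros h [a [b [c [_ Hh]]]] hq.
  assert (goodh : exists S, incl S A /\ NoDup S /\ (length A <= 3 * (length S * length S))%nat /\ forall p, V S p -> h p).
  { apply NNPP. intro Hng.
    set (Y := filt (fun y => ~ h y) Vl).
    assert (HY : forall y, In y Y <-> In y Vl /\ ~ h y) by (intros y; exact (filt_In (fun y => ~ h y) Vl y)).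
    destruct (classic (Y = [])) as [HY0|HY0].
    { apply Hng. exists A. split; [intros x; auto|]. split; auto. split; [nia|].
      intros p hp. apply NNPP. intro hnp. assert (In p Y) by (apply HY; auto). rewrite HY0 in H. destruct H. }
    set (f := fun y : point => a * fst y + b * snd y).
    destruct (argmin f Y HY0) as [y0 [hy0 hmin]].
    apply HY in hy0. destruct hy0 as [hy0V hy0h].
    assert (fy0 : f y0 > c) by (unfold f; apply Rnot_le_gt; intro; apply hy0h; apply Hh; auto).
    assert (fq : f q <= c) by (apply Hh; auto).
    set (W := map (fun y => vsub y y0) Y).
    set (r := vsub q y0).
    destruct (farkas W r (a,b)) as [nn [hnC [hnW hnr]]].
    { intros w hw. unfold W in hw. apply in_map_iff in hw. destruct hw as [y [<- hy]].
      specialize (hmin y hy). unfold f, dot, vsub in *; simpl. lra. }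
    { unfold dot, r, vsub, f in *; simpl. lra. }
    assert (hcF : In (nn, y0) F).
    { apply HFi. split.
      - apply in_prod; auto. unfold Cand in hnC. apply in_app_or in hnC. unfold Nl. apply in_or_app.
        destruct hnC as [h0|h0]; [left; auto|right].
        apply in_flat_map in h0. destruct h0 as [w [hw hn]]. unfold W in hw. apply in_map_iff in hw.
        destruct hw as [y [<- hy]]. apply HY in hy.
        apply in_flat_map. exists y0. split; auto. apply in_flat_map. exists y. split; [tauto|auto].
      - intros [S [hS1 [hS2 [hS3 hS4]]]]. apply Hng. exists S. split; auto. split; auto. split; auto.
        intros p hp. apply NNPP. intro hnp.
        assert (In p Y) by (apply HY; split; auto; apply HVl; eapply V_incl; eauto).
        assert (dot nn (vsub p y0) >= 0) by (apply hnW; unfold W; apply in_map_iff; exists p; auto).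
        specialize (hS4 p hp). unfold Oh, sf, dot, vsub in *; simpl in *. lra. }
    specialize (Hq _ hcF). unfold mem, dot, r, vsub in *; simpl in *. lra. }
  destruct goodh as [S [h1 [h2 [h3 h4]]]]. exists S. split; auto. split; auto. split; auto.
  apply sqrt_conv; auto.
Qed.
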